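(* Let $G_n$ be the $n\times n$ honeycomb lattice embedded in a torus, and consider the set $\Omega$ of configurations of the 1-2 model on $G_n$, i.e. edge subsets $X$ such that every vertex is incident to exactly one or exactly two edges of $X$. Then any two elements of $\Omega$ can be connected by a finite sequence of elements of $\Omega$ in which consecutive elements differ by adding or deleting a single edge. Consequently the Markov chain on $\Omega$ that moves from $X$ to each such neighbour with positive probability (and stays put otherwise), as used for Glauber dynamics of the 1-2 model with signature $(0,c,b,a,a,b,c,0)$, $a,b,c>0$, is irreducible.
   Context: The 1-2 model is the vertex model on the honeycomb lattice whose signature at every vertex is $(0,c,b,a,a,b,c,0)$, indexed by the local configurations $000,001,\dots,111$ of the incident $(a,b,c)$-edges, with $a,b,c>0$; so the allowed configurations are exactly those with one or two edges present at each vertex. *)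

(* Defs.v *)
From HB Require Import structures.
From mathcomp Require Import all_boot all_order all_algebra.
Set Implicit Arguments. Unset Strict Implicit. Unset Printing Implicit Defensive.
Import Order.TTheory GRing.Theory Num.Theory.

(* Vertices: (i, j, true) = black vertex at (i,j), (i, j, false) = white vertex,
   i, j taken mod n.
   Edges: (i, j, t) with t : 'I_3; edge (i,j,t) joins the black vertex (i,j) to
   the white vertex (i,j) if t = 0 (a-edge), (i-1,j) if t = 1 (b-edge),
   (i,j-1) if t = 2 (c-edge), indices mod n.  Edges are indexed explicitly,
   so for tiny n parallel edges are kept distinct (multigraph). *)
Definition hvert (n : nat) : finType := ('I_n * 'I_n * bool)%type.
Definition hedge (n : nat) : finType := ('I_n * 'I_n * 'I_3)%type.

Definition white_end (n : nat) (e : hedge n) : nat * nat :=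
  let: (i, j, t) := e in
  if nat_of_ord t == 0%N then (nat_of_ord i, nat_of_ord j)
  else if nat_of_ord t == 1%N then (((i + n).-1 %% n)%N, nat_of_ord j)
  else (nat_of_ord i, ((j + n).-1 %% n)%N).

Definition incident (n : nat) (v : hvert n) (e : hedge n) : bool :=
  let: (vi, vj, black) := v in
  let: (i, j, t) := e in
  if black then (vi == i) && (vj == j)
  else (nat_of_ord vi, nat_of_ord vj) == white_end e.

Definition degX (n : nat) (X : {set hedge n}) (v : hvert n) : nat :=
  #|[set e in X | incident v e]|.

Definition one_two_config (n : nat) (X : {set hedge n}) : bool :=
  [forall v : hvert n, (degX X v == 1%N) || (degX X v == 2%N)].

Definition single_flip (n : nat) (X Y : {set hedge n}) : bool :=
  #|(X :\: Y) :|: (Y :\: X)| == 1%N.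

Definition omega_step (n : nat) : rel {set hedge n} :=
  fun X Y => [&& one_two_config X, one_two_config Y & single_flip X Y].

(* Main.v *)
Require Import Defs.
From HB Require Import structures.
From mathcomp Require Import all_boot all_order all_algebra.
From Stdlib Require Import Classical_Prop.
Import Order.TTheory GRing.Theory Num.Theory.
Set Implicit Arguments. Unset Strict Implicit. Unset Printing Implicit Defensive.

Lemma npos n (i : 'I_n) : (0 < n)%N.
Proof. exact: leq_ltn_trans (leq0n i) (ltn_ord i). Qed.
Definition sc n (i : 'I_n) : 'I_n := Ordinal (ltn_pmod i.+1 (npos i)).
Definition pr n (i : 'I_n) : 'I_n := Ordinal (ltn_pmod (i + n).-1 (npos i)).

Lemma pr_sc n (i : 'I_n) : pr (sc i) = i.
Proof.
apply: val_inj => /=; case: i => k Hk /=.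
move: Hk; rewrite leq_eqVlt => /orP[/eqP Hn|Hl].
  by rewrite -Hn modnn add0n /= modn_small.
by rewrite (modn_small Hl) addSn /= modnDr modn_small // ltnW.
Qed.

Lemma sc_pr n (i : 'I_n) : sc (pr i) = i.
Proof.
apply: val_inj => /=; have Hn := npos i; case: i => [[|k] Hk] /=.
  rewrite add0n (@modn_small n.-1) ?ltn_predL // prednK // modnn.
  done.
by change (((k + n)%N %% n).+1 %% n = k.+1); rewrite modnDr !modn_small // ltnW.
Qed.

Definition t0 : 'I_3 := @Ordinal 3 0 isT.
Definition t1 : 'I_3 := @Ordinal 3 1 isT.
Definition t2 : 'I_3 := @Ordinal 3 2 isT.

Definition ed n (v : hvert n) (t : 'I_3) : hedge n :=
  let: (i, j, b) := v in
  if b then (i, j, t)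
  else if val t == 1%N then (sc i, j, t) else if val t == 2%N then (i, sc j, t) else (i, j, t).

Definition nb n (v : hvert n) (t : 'I_3) : hvert n :=
  let: (i, j, b) := v in
  if b then (if val t == 1%N then (pr i, j, false) else if val t == 2%N then (i, pr j, false) else (i, j, false))
  else (if val t == 1%N then (sc i, j, true) else if val t == 2%N then (i, sc j, true) else (i, j, true)).

Lemma ed_type n (v : hvert n) t : (ed v t).2 = t.
Proof. by case: v => [[i j] []] /=; do 2?case: ifP. Qed.

Lemma ed_nb n (v : hvert n) t : ed (nb v t) t = ed v t.
Proof. by case: v => [[i j] []]; case: t => [[|[|[|k]]] Ht] //=; rewrite ?sc_pr. Qed.

Lemma nb_nb n (v : hvert n) t : nb (nb v t) t = v.
Proof. by case: v => [[i j] []]; case: t => [[|[|[|k]]] Ht] //=; rewrite ?sc_pr ?pr_sc. Qed.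

Lemma nb_col n (v : hvert n) t : (nb v t).2 = ~~ v.2.
Proof. by case: v => [[i j] []]; case: t => [[|[|[|k]]] Ht] //=. Qed.

Lemma sc_inj n : injective (@sc n).
Proof. by move=> i j H; rewrite -(pr_sc i) H pr_sc. Qed.

Lemma ed_inj_col n (u v : hvert n) t : u.2 = v.2 -> ed u t = ed v t -> u = v.
Proof.
case: u => [[i j] b]; case: v => [[i' j'] b'] /= <-.
case: b => /=; first by case=> -> ->.
case: t => [[|[|[|k]]] Ht] //=; first by case=> -> ->.
  by move=> E; have /= H1 := congr1 (fun e => e.1.1) E; have /= H2 := congr1 (fun e => e.1.2) E; rewrite (sc_inj H1) H2.
by move=> E; have /= H1 := congr1 (fun e => e.1.2) E; have /= H2 := congr1 (fun e => e.1.1) E; rewrite (sc_inj H1) H2.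
Qed.

Lemma ed_ends n (u v : hvert n) s t : ed u s = ed v t -> u = v \/ u = nb v t.
Proof.
move=> E; have est : s = t by rewrite -(ed_type u s) E ed_type.
subst s; case: (boolP (u.2 == v.2)) => [/eqP H|H]; first by left; exact: ed_inj_col H E.
right; apply: (@ed_inj_col n u (nb v t) t); last by rewrite ed_nb.
by rewrite nb_col; move: H; case: (u.2); case: (v.2).
Qed.

Lemma incidentE n (v : hvert n) (e : hedge n) : incident v e = (e == ed v e.2).
Proof.
case: v => [[a b] []]; case: e => [[i j] t] /=.
  by rewrite !xpair_eqE eqxx andbT; apply/andP/andP => [][/eqP-> /eqP->].
case: t => [[|[|[|k]]] Ht] //=; rewrite !xpair_eqE eqxx ?andbT.
- by apply/andP/andP => [][H1 H2]; split; rewrite eq_sym.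
- apply/andP/andP => [][/eqP H1 /eqP H2]; split; apply/eqP.
  + by rewrite -(sc_pr i); congr sc; apply: val_inj; rewrite /= H1.
  + by apply: val_inj; rewrite /= H2.
  + by rewrite H1; change (val a = val (pr (sc a))); rewrite pr_sc.
  + by rewrite H2.
- apply/andP/andP => [][/eqP H1 /eqP H2]; split; apply/eqP.
  + by apply: val_inj; rewrite /= H1.
  + by rewrite -(sc_pr j); congr sc; apply: val_inj; rewrite /= H2.
  + by rewrite H1.
  + by rewrite H2; change (val b = val (pr (sc b))); rewrite pr_sc.
Qed.

Lemma ed_inj n (v : hvert n) : injective (ed v).
Proof. by move=> s t E; rewrite -(ed_type v s) E ed_type. Qed.

Lemma degXE n (X : {set hedge n}) v :
  degX X v = ((ed v t0 \in X) + (ed v t1 \in X) + (ed v t2 \in X))%N.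
Proof.
rewrite /degX; have -> : [set e in X | incident v e] = ed v @: [set t | ed v t \in X].
  apply/setP => e; rewrite !inE incidentE; apply/andP/imsetP.
    by case=> Xe He; exists e.2; rewrite ?inE -(eqP He).
  by case=> t; rewrite inE => Ht ->; rewrite ed_type eqxx Ht.
rewrite card_imset; last exact: ed_inj.
rewrite -sum1_card big_mkcond /= !big_ord_recl big_ord0 /= !inE.
have -> : (lift ord0 (lift ord0 ord0) : 'I_3) = t2 by apply: val_inj.
have -> : (lift ord0 ord0 : 'I_3) = t1 by apply: val_inj.
have -> : (ord0 : 'I_3) = t0 by apply: val_inj.
by case: (ed v t0 \in X); case: (ed v t1 \in X); case: (ed v t2 \in X).
Qed.

Definition okv n (X : {set hedge n}) (u : hvert n) : bool :=
  [|| ed u t0 \in X, ed u t1 \in X | ed u t2 \in X] &&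
  ~~ [&& ed u t0 \in X, ed u t1 \in X & ed u t2 \in X].

Lemma okE n (X : {set hedge n}) : one_two_config X = [forall u, okv X u].
Proof.
apply: eq_forallb => u; rewrite degXE /okv.
by case: (ed u t0 \in X); case: (ed u t1 \in X); case: (ed u t2 \in X).
Qed.

Lemma okP n (X : {set hedge n}) : reflect (forall u, okv X u) (one_two_config X).
Proof. by rewrite okE; apply: forallP. Qed.

Lemma ed_far n (u v : hvert n) s t : u != v -> u != nb v t -> (ed u s == ed v t) = false.
Proof. by move=> H1 H2; apply/eqP => /ed_ends[] /eqP; rewrite ?(negbTE H1) ?(negbTE H2). Qed.

Lemma ok_change n (X Y : {set hedge n}) v t :
  one_two_config X ->
  (forall u s, u != v -> u != nb v t -> (ed u s \in Y) = (ed u s \in X)) ->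
  okv Y v -> okv Y (nb v t) -> one_two_config Y.
Proof.
move=> /okP HX HY Hv Hnv; apply/okP => u.
case: (eqVneq u v) => [->//|H1]; case: (eqVneq u (nb v t)) => [->//|H2].
by rewrite /okv !HY //; apply: HX.
Qed.

Lemma memU1 n (X : {set hedge n}) u v s t : u != v -> u != nb v t ->
  (ed u s \in ed v t |: X) = (ed u s \in X).
Proof. by move=> H1 H2; rewrite in_setU1 ed_far. Qed.

Lemma memD1 n (X : {set hedge n}) u v s t : u != v -> u != nb v t ->
  (ed u s \in X :\ ed v t) = (ed u s \in X).
Proof. by move=> H1 H2; rewrite in_setD1 ed_far. Qed.

Lemma step_sym n : symmetric (@omega_step n).
Proof. by move=> X Y; rewrite /omega_step /single_flip setUC andbCA. Qed.

Lemma flip_add n (X : {set hedge n}) e : e \notin X -> single_flip X (e |: X).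
Proof.
move=> He; rewrite /single_flip.
have -> : (X :\: (e |: X)) :|: ((e |: X) :\: X) = [set e].
  apply/setP => f; rewrite !inE; case: (eqVneq f e) => [->|]; first by rewrite (negbTE He).
  by case: (f \in X).
by rewrite cards1.
Qed.

Lemma flip_del n (X : {set hedge n}) e : e \in X -> single_flip X (X :\ e).
Proof.
move=> He; rewrite /single_flip.
have -> : (X :\: (X :\ e)) :|: ((X :\ e) :\: X) = [set e].
  apply/setP => f; rewrite !inE; case: (eqVneq f e) => [->|]; first by rewrite He.
  by case: (f \in X).
by rewrite cards1.
Qed.

Lemma okv_sandwich n (X Y Z : {set hedge n}) u :
  okv X u -> okv Z u -> {subset X <= Y} -> {subset Y <= Z} -> okv Y u.
Proof.
move=> hX hZ sXY sYZ.
move: hX hZ (sXY (ed u t0)) (sXY (ed u t1)) (sXY (ed u t2))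
  (sYZ (ed u t0)) (sYZ (ed u t1)) (sYZ (ed u t2)); rewrite /okv.
case: (ed u t0 \in X); case: (ed u t1 \in X); case: (ed u t2 \in X);
case: (ed u t0 \in Y); case: (ed u t1 \in Y); case: (ed u t2 \in Y);
case: (ed u t0 \in Z); case: (ed u t1 \in Z); case: (ed u t2 \in Z) => //=.
all: by intros; match goal with H : is_true true -> is_true false |- _ => exact: (H isT) end.
Qed.

Lemma mono n (X Z : {set hedge n}) :
  one_two_config X -> one_two_config Z -> X \subset Z -> connect (@omega_step n) X Z.
Proof.
move=> HX HZ; move Hk: #|Z :\: X| => k; elim: k X HX Hk => [|k IH] X HX Hk sXZ.
  have sZX : Z \subset X by rewrite -setD_eq0 -cards_eq0 Hk.
  have -> : X = Z by apply/eqP; rewrite eqEsubset sXZ sZX.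
  exact: connect0.
have : Z :\: X != set0 by rewrite -card_gt0 Hk.
case/set0Pn => e; rewrite inE => /andP[He Ze].
have HX' : one_two_config (e |: X).
  apply/okP => u; apply: (okv_sandwich (X := X) (Z := Z)).
  - exact: (okP _ HX).
  - exact: (okP _ HZ).
  - by move=> f; rewrite in_setU1 orbC => ->.
  - by move=> f; rewrite in_setU1 => /orP[/eqP->//|/(subsetP sXZ)].
apply: (connect_trans (y := e |: X)).
  by apply: connect1; rewrite /omega_step HX HX' flip_add.
apply: IH => //.
  have -> : Z :\: (e |: X) = (Z :\: X) :\ e.
    by apply/setP => f; rewrite !inE negb_or andbA andbAC.
  by move: Hk; rewrite (cardsD1 e) inE He Ze add1n => -[].
by apply/subsetP => f; rewrite in_setU1 => /orP[/eqP->//|/(subsetP sXZ)].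
Qed.

Definition Aset n : {set hedge n} := [set e | e.2 == t0].

Lemma memA n (u : hvert n) t : (ed u t \in Aset n) = (t == t0).
Proof. by rewrite inE ed_type. Qed.

Lemma ok_A n : one_two_config (Aset n).
Proof. by apply/okP => u; rewrite /okv !memA. Qed.

Definition bad n (X : {set hedge n}) u :=
  [&& ed u t0 \notin X, ed u t1 \in X & ed u t2 \in X].

Lemma good_conn n (X : {set hedge n}) :
  one_two_config X -> (forall u, ~~ bad X u) -> connect (@omega_step n) X (Aset n).
Proof.
move=> HX Hg.
have HZ : one_two_config (X :|: Aset n).
  apply/okP => u; move: (okP _ HX u) (Hg u); rewrite /okv /bad !inE !ed_type /=.
  by case: (ed u t0 \in X); case: (ed u t1 \in X); case: (ed u t2 \in X).
apply: (connect_trans (y := X :|: Aset n)); first by apply: mono => //; exact: subsetUl.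
by rewrite (sym_connect_sym (@step_sym n)); apply: mono => //; [exact: ok_A | exact: subsetUr].
Qed.

Definition nbad n (X : {set hedge n}) := #|[set u | bad X u]|.

Lemma nbad_lt n (X X' : {set hedge n}) v :
  bad X v -> (forall u, bad X' u -> bad X u) -> ~~ bad X' v -> nbad X' < nbad X.
Proof.
move=> Hv Hs Hv'; rewrite /nbad (cardsD1 v [set u | bad X u]) inE Hv add1n ltnS.
apply: subset_leq_card; apply/subsetP => u; rewrite !inE => Hu.
by rewrite (Hs _ Hu) andbT; apply/eqP => Euv; move: Hv'; rewrite -Euv Hu.
Qed.

Lemma typ_neq n (u w : hvert n) s t : s != t -> (ed u s == ed w t) = false.
Proof.
move=> H; apply/eqP => E; have := congr1 snd E; rewrite !ed_type => E'.
by rewrite E' eqxx in H.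
Qed.

Lemma e01 n (u w : hvert n) : (ed u t0 == ed w t1) = false. Proof. exact: typ_neq. Qed.
Lemma e10 n (u w : hvert n) : (ed u t1 == ed w t0) = false. Proof. exact: typ_neq. Qed.
Lemma e02 n (u w : hvert n) : (ed u t0 == ed w t2) = false. Proof. exact: typ_neq. Qed.
Lemma e20 n (u w : hvert n) : (ed u t2 == ed w t0) = false. Proof. exact: typ_neq. Qed.
Lemma e12 n (u w : hvert n) : (ed u t1 == ed w t2) = false. Proof. exact: typ_neq. Qed.
Lemma e21 n (u w : hvert n) : (ed u t2 == ed w t1) = false. Proof. exact: typ_neq. Qed.
Lemma eqed n (u : hvert n) s t : (ed u s == ed u t) = (s == t).
Proof. exact: (inj_eq (@ed_inj n u)). Qed.

Definition progress n (X : {set hedge n}) :=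
  exists2 X', one_two_config X' & connect (@omega_step n) X X' && (nbad X' < nbad X).

Lemma escape1 n (X : {set hedge n}) v :
  one_two_config X -> bad X v ->
  progress X \/
  [&& ed (nb v t1) t0 \notin X, ed (nb v t1) t2 \notin X & bad X (nb (nb v t1) t0)].
Proof.
move=> HX Hb; have Hv := Hb; rewrite /bad in Hv; case/and3P: Hv => hv0 hv1 hv2.
have hp1 : ed (nb v t1) t1 \in X by rewrite ed_nb.
have Hp := okP _ HX (nb v t1).
case: (boolP ((ed (nb v t1) t0 \in X) || (ed (nb v t1) t2 \in X))) => Hdeg.
  left; set X' := X :\ ed v t1.
  have HX' : one_two_config X'.
    apply: (ok_change (v := v) (t := t1) HX).
    - by move=> u s H1 H2; apply: memD1.
    - by rewrite /okv /X' !in_setD1 !eqed /= hv2 orbT andbF.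
    - move: Hp Hdeg; rewrite /okv /X' !in_setD1 -(ed_nb v t1) !eqed /= hp1.
      by case: (ed (nb v t1) t0 \in X); case: (ed (nb v t1) t2 \in X).
  exists X' => //; apply/andP; split.
    by apply: connect1; rewrite /omega_step HX HX' flip_del.
  apply: (nbad_lt Hb).
    by move=> u; rewrite /bad /X' !in_setD1 e01 e21 /= => /and3P[-> /andP[_ ->] ->].
  by rewrite /bad /X' !in_setD1 eqxx /= !andbF.
move: Hdeg; rewrite negb_or => /andP[hp0 hp2].
case: (boolP (bad X (nb (nb v t1) t0))) => Hr; first by right; apply/and3P.
left; set X1 := ed (nb v t1) t0 |: X; set X2 := X1 :\ ed v t1.
have hr0 : ed (nb (nb v t1) t0) t0 \notin X by rewrite ed_nb.
have Hr' := okP _ HX (nb (nb v t1) t0).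
have HX1 : one_two_config X1.
  apply: (ok_change (v := nb v t1) (t := t0) HX).
  - by move=> u s H1 H2; apply: memU1.
  - by rewrite /okv /X1 !in_setU1 !eqed /= hp1 /= (negbTE hp2).
  - move: Hr Hr' hr0; rewrite /okv /bad /X1 !in_setU1 -(ed_nb (nb v t1) t0) !eqed /=.
    by case: (ed (nb (nb v t1) t0) t0 \in X); case: (ed (nb (nb v t1) t0) t1 \in X);
       case: (ed (nb (nb v t1) t0) t2 \in X).
have h1 : ed v t1 \in X1 by rewrite /X1 in_setU1 hv1 orbT.
have HX2 : one_two_config X2.
  apply: (ok_change (v := v) (t := t1) HX1).
  - by move=> u s H1 H2; apply: memD1.
  - by rewrite /okv /X2 /X1 !in_setD1 !in_setU1 !eqed e20 hv2 /= orbT andbF.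
  - by rewrite /okv /X2 /X1 !in_setD1 !in_setU1 -(ed_nb v t1) !eqed /=.
exists X2 => //; apply/andP; split.
  apply: (connect_trans (y := X1)); apply: connect1.
    by rewrite /omega_step HX HX1 flip_add.
  by rewrite /omega_step HX1 HX2 flip_del.
apply: (nbad_lt Hb).
  move=> u; rewrite /bad /X2 /X1 !in_setD1 !in_setU1 e01 e21 e10 e20 /=.
  by case/and3P; rewrite negb_or => /andP[_ ->] /andP[_ ->] ->.
by rewrite /bad /X2 !in_setD1 eqxx /= !andbF.
Qed.

Lemma escape2 n (X : {set hedge n}) v :
  one_two_config X -> bad X v ->
  progress X \/
  [&& ed (nb v t2) t0 \notin X, ed (nb v t2) t1 \notin X & bad X (nb (nb v t2) t0)].
Proof.
move=> HX Hb; have Hv := Hb; rewrite /bad in Hv; case/and3P: Hv => hv0 hv1 hv2.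
have hp1 : ed (nb v t2) t2 \in X by rewrite ed_nb.
have Hp := okP _ HX (nb v t2).
case: (boolP ((ed (nb v t2) t0 \in X) || (ed (nb v t2) t1 \in X))) => Hdeg.
  left; set X' := X :\ ed v t2.
  have HX' : one_two_config X'.
    apply: (ok_change (v := v) (t := t2) HX).
    - by move=> u s H1 H2; apply: memD1.
    - by rewrite /okv /X' !in_setD1 !eqed /= hv1 orbT !andbF.
    - move: Hp Hdeg; rewrite /okv /X' !in_setD1 -(ed_nb v t2) !eqed /= hp1.
      by case: (ed (nb v t2) t0 \in X); case: (ed (nb v t2) t1 \in X).
  exists X' => //; apply/andP; split.
    by apply: connect1; rewrite /omega_step HX HX' flip_del.
  apply: (nbad_lt Hb).
    by move=> u; rewrite /bad /X' !in_setD1 e02 e12 /= => /and3P[-> -> /andP[_ ->]].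
  by rewrite /bad /X' !in_setD1 eqxx /= !andbF.
move: Hdeg; rewrite negb_or => /andP[hp0 hp2].
case: (boolP (bad X (nb (nb v t2) t0))) => Hr; first by right; apply/and3P.
left; set X1 := ed (nb v t2) t0 |: X; set X2 := X1 :\ ed v t2.
have hr0 : ed (nb (nb v t2) t0) t0 \notin X by rewrite ed_nb.
have Hr' := okP _ HX (nb (nb v t2) t0).
have HX1 : one_two_config X1.
  apply: (ok_change (v := nb v t2) (t := t0) HX).
  - by move=> u s H1 H2; apply: memU1.
  - by rewrite /okv /X1 !in_setU1 !eqed /= hp1 /= (negbTE hp2).
  - move: Hr Hr' hr0; rewrite /okv /bad /X1 !in_setU1 -(ed_nb (nb v t2) t0) !eqed /=.
    by case: (ed (nb (nb v t2) t0) t0 \in X); case: (ed (nb (nb v t2) t0) t2 \in X);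
       case: (ed (nb (nb v t2) t0) t1 \in X).
have h1 : ed v t2 \in X1 by rewrite /X1 in_setU1 hv2 orbT.
have HX2 : one_two_config X2.
  apply: (ok_change (v := v) (t := t2) HX1).
  - by move=> u s H1 H2; apply: memD1.
  - by rewrite /okv /X2 /X1 !in_setD1 !in_setU1 !eqed e10 hv1 /= orbT !andbF.
  - by rewrite /okv /X2 /X1 !in_setD1 !in_setU1 -(ed_nb v t2) !eqed /= andbF.
exists X2 => //; apply/andP; split.
  apply: (connect_trans (y := X1)); apply: connect1.
    by rewrite /omega_step HX HX1 flip_add.
  by rewrite /omega_step HX1 HX2 flip_del.
apply: (nbad_lt Hb).
  move=> u; rewrite /bad /X2 /X1 !in_setD1 !in_setU1 e02 e12 e20 e10 /=.
  by case/and3P; rewrite negb_or => /andP[_ ->] -> /andP[_ ->].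
by rewrite /bad /X2 !in_setD1 eqxx /= !andbF.
Qed.

Lemma reduce n (X : {set hedge n}) v : one_two_config X -> bad X v -> progress X.
Proof.
move=> HX Hv; case: (Classical_Prop.classic (progress X)) => // Hnp; exfalso.
set S := [set u | bad X u].
have closed (t : 'I_3) : (t = t1 \/ t = t2) ->
    S = [set nb (nb u t) t0 | u in S].
  move=> Ht; apply/eqP; rewrite eq_sym eqEcard card_imset; last first.
    move=> x y /(congr1 (fun z => nb z t0)); rewrite !nb_nb => /(congr1 (fun z => nb z t)).
    by rewrite !nb_nb.
  rewrite leqnn andbT; apply/subsetP => w /imsetP[u]; rewrite inE => Hu ->.
  rewrite inE; case: Ht => ->.
    by case: (escape1 HX Hu) => // /and3P[].
  by case: (escape2 HX Hu) => // /and3P[].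
have : v \in S by rewrite inE.
rewrite {1}(closed t1 (or_introl erefl)) => /imsetP[u1]; rewrite inE => Hu1 E1.
have : v \in S by rewrite inE.
rewrite {1}(closed t2 (or_intror erefl)) => /imsetP[u2]; rewrite inE => Hu2 E2.
have w1 : nb v t0 = nb u1 t1 by rewrite E1 nb_nb.
have w2 : nb v t0 = nb u2 t2 by rewrite E2 nb_nb.
case: (escape1 HX Hu1) => // /and3P[_ H _].
move: Hu2; rewrite /bad -(ed_nb u2 t2) -w2 w1 => /and3P[_ _].
by rewrite (negbTE H).
Qed.

Lemma to_A n (X : {set hedge n}) : one_two_config X -> connect (@omega_step n) X (Aset n).
Proof.
move=> HX; move: {2}(nbad X).+1 (ltnSn (nbad X)) => m.
elim: m X HX => // m IH X HX Hkm.
case: (boolP [exists u, bad X u]) => [/existsP[v Hv]|Hno].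
  have [X' HX' /andP[c lt]] := reduce HX Hv.
  apply: (connect_trans c); apply: IH => //.
  by rewrite -ltnS (leq_trans _ Hkm).
by apply: good_conn => // u; apply/negP => Hu; move/existsP: Hno; apply; exists u.
Qed.

Lemma conn_all n (X Y : {set hedge n}) : one_two_config X -> one_two_config Y ->
  exists s : seq {set hedge n}, path (@omega_step n) X s && (last X s == Y).
Proof.
move=> HX HY.
have : connect (@omega_step n) X Y.
  apply: (connect_trans (to_A HX)).
  by rewrite (sym_connect_sym (@step_sym n)); exact: to_A.
by case/connectP => s Hs ->; exists s; rewrite Hs eqxx.
Qed.

Unset Implicit Arguments.
Local Open Scope ring_scope.

Theorem proposition7p1 (n : nat) :
  (forall X Y : {set hedge n}, one_two_config X -> one_two_config Y ->
     exists s : seq {set hedge n},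
       path (@omega_step n) X s && (last X s == Y))
  /\
  (forall (R : realFieldType) (P : {set hedge n} -> {set hedge n} -> R),
     (forall X Y, one_two_config X -> one_two_config Y -> 0 <= P X Y) ->
     (forall X, one_two_config X ->
        \sum_(Y : {set hedge n} | one_two_config Y) P X Y = 1) ->
     (forall X Y, omega_step X Y -> 0 < P X Y) ->
     forall X Y : {set hedge n}, one_two_config X -> one_two_config Y ->
       exists s : seq {set hedge n},
         path (fun A B => one_two_config A && one_two_config B && (0 < P A B)) X s
         && (last X s == Y)).
Proof.
split; first exact: conn_all.
move=> R P _ _ Hpos X Y HX HY.
have [s /andP[Hs Hl]] := conn_all HX HY.
exists s; rewrite Hl andbT; apply: sub_path Hs => A B HAB.
by move: (HAB); rewrite /omega_step => /and3P[-> -> _]; rewrite Hpos.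
Qed.
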